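(* Let $0<r_i<r_j$, let $g(\theta)=\dfrac{r_ir_j\sin\theta}{(r_i^2+r_j^2-2r_ir_j\cos\theta)^{3/2}}$, and let $\theta_{ij}\in(0,\pi)$ be defined by \[\cos\theta_{ij}=\frac{-r_i^2-r_j^2+\sqrt{r_i^4+14r_i^2r_j^2+r_j^4}}{2r_ir_j}\in(0,1).\] Then for $\theta\in[0,\pi]$: if $\cos\theta\in(\cos\theta_{ij},1)$ then \[ g'(\theta)< g'(0)\,\frac{\cos\theta-\cos\theta_{ij}}{1-\cos\theta_{ij}},\] and if $\cos\theta\in(-1,\cos\theta_{ij})$ then \[ g'(\theta)< g'(\pi)\,\frac{\cos\theta-\cos\theta_{ij}}{-1-\cos\theta_{ij}}.\] *)

(* Defs.v *)
From Stdlib Require Import Reals.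
From Coquelicot Require Import Coquelicot.
Open Scope R_scope.

Definition g (ri rj : R) (theta : R) : R :=
  ri * rj * sin theta / Rpower (ri ^ 2 + rj ^ 2 - 2 * ri * rj * cos theta) (3 / 2).

Definition cos_theta_ij (ri rj : R) : R :=
  (- ri ^ 2 - rj ^ 2 + sqrt (ri ^ 4 + 14 * ri ^ 2 * rj ^ 2 + rj ^ 4)) / (2 * ri * rj).

Definition theta_ij (ri rj : R) : R := acos (cos_theta_ij ri rj).

(* Main.v *)
Require Import Defs.
From Stdlib Require Import Reals Lra Psatz.
From Coquelicot Require Import Coquelicot.
Open Scope R_scope.

Definition DD (a b t : R) := a^2 + b^2 - 2*a*b*cos t.

Lemma DD_pos a b t : 0 < a -> a < b -> 0 < DD a b t.
Proof.
  intros. unfold DD. pose proof (COS_bound t).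
  assert (0 <= (1 - cos t)*(a*b)) by (apply Rmult_le_pos; nra). nra.
Qed.

Lemma g_alt a b t : 0 < a -> a < b ->
  g a b t = a*b*sin t / (DD a b t * sqrt (DD a b t)).
Proof.
  intros. unfold g. fold (DD a b t).
  replace (3/2) with (1 + /2) by field.
  rewrite Rpower_plus, Rpower_1, Rpower_sqrt; auto using DD_pos.
Qed.

Lemma derive_g a b t : 0 < a -> a < b ->
  Derive (g a b) t = a*b*(a*b*cos t^2 + (a^2+b^2)*cos t - 3*a*b) / (DD a b t^2 * sqrt (DD a b t)).
Proof.
  intros Ha Hab.
  rewrite (Derive_ext _ (fun t => a*b*sin t / (DD a b t * sqrt (DD a b t)))) by (intros; apply g_alt; auto).
  apply is_derive_unique. unfold DD.
  pose proof (DD_pos a b t Ha Hab) as HD. unfold DD in HD.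
  pose proof (sqrt_lt_R0 _ HD) as HS.
  auto_derive.
  - repeat split; try lra; try nra. 
  - all: replace (a * (a * 1) + b * (b * 1) + - (2 * a * b * cos t)) with (a ^ 2 + b ^ 2 - 2 * a * b * cos t) by ring.
    { apply Rmult_integral_contrapositive_currified; lra. }
    pose proof (sin2_cos2 t) as H. unfold Rsqr in H.
    assert (HSS := sqrt_sqrt _ (Rlt_le _ _ HD)).
    set (S := sqrt _) in *. set (D := a ^ 2 + b ^ 2 - 2 * a * b * cos t) in *.
    assert (HDe : D = a ^ 2 + b ^ 2 - 2 * a * b * cos t) by reflexivity.
    clearbody S D.
    transitivity (a*b*(cos t * D - 3*a*b*(sin t)^2)/(D^2*S)).
    + match goal with |- ?x = ?y => change (@eq R x y) end. rewrite <- HSS. field. lra.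
    + replace (sin t ^ 2) with (1 - cos t ^ 2) by nra. rewrite HDe at 1. match goal with |- ?x = ?y => change (@eq R x y) end. field.
      split; lra.
Qed.

Lemma frac_lt u v q1 q2 : 0 < u < v -> 0 < q2 < q1 -> u / q1 < v / q2.
Proof.
  intros [Hu Huv] [Hq2 Hq].
  assert (0 < / q1 < / q2) by (split; [apply Rinv_0_lt_compat; lra | apply Rinv_lt_contravar; nra]).
  unfold Rdiv. nra.
Qed.

Definition Qc a b c := (a^2+b^2-2*a*b*c)^2 * sqrt (a^2+b^2-2*a*b*c).

Lemma Qc_lt a b x y : 0 < a -> a < b -> -1 <= x -> x < y -> y <= 1 -> 0 < Qc a b y < Qc a b x.
Proof.
  intros Ha Hab Hx Hxy Hy. unfold Qc.
  assert (Hab0 : 0 < a*b) by nra.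
  assert (H1 : 0 < a^2+b^2-2*a*b*y) by nra.
  assert (H2 : a^2+b^2-2*a*b*y < a^2+b^2-2*a*b*x) by nra.
  assert (0 < sqrt (a^2+b^2-2*a*b*y) < sqrt (a^2+b^2-2*a*b*x)).
  { split. apply sqrt_lt_R0; lra. apply sqrt_lt_1; lra. }
  assert (0 < (a^2+b^2-2*a*b*y)^2 < (a^2+b^2-2*a*b*x)^2) by (split; nra).
  split; nra.
Qed.

Lemma derive_g' a b t : 0 < a -> a < b ->
  Derive (g a b) t = a*b*(a*b*cos t^2 + (a^2+b^2)*cos t - 3*a*b) / Qc a b (cos t).
Proof. intros. rewrite derive_g by auto. reflexivity. Qed.

Lemma c0_facts a b : 0 < a -> a < b ->
  let c0 := cos_theta_ij a b in
  0 < c0 < 1 /\ a*b*c0^2 + (a^2+b^2)*c0 - 3*a*b = 0.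
Proof.
  intros Ha Hab c0. unfold c0, cos_theta_ij.
  set (S := sqrt _).
  assert (HS0 : 0 <= a ^ 4 + 14 * a ^ 2 * b ^ 2 + b ^ 4) by nra.
  assert (HSS : S * S = a ^ 4 + 14 * a ^ 2 * b ^ 2 + b ^ 4) by (apply sqrt_sqrt; auto).
  assert (HSp : 0 <= S) by apply sqrt_pos.
  assert (Hab0 : 0 < a*b) by nra.
  assert (HS1 : a^2+b^2 < S) by nra.
  assert (HS2 : S < a^2+b^2+2*a*b).
  { assert (0 < a*b*((b-a)*(b-a))) by (apply Rmult_lt_0_compat; nra).
    assert ((a^2+b^2+2*a*b)^2 > S*S) by nra. nra. }
  split; [split|].
  - apply Rdiv_lt_0_compat; lra.
  - apply (Rmult_lt_reg_r (2*a*b)); [lra|]. unfold Rdiv. rewrite Rmult_assoc, Rinv_l by lra. lra.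
  - field_simplify; [|lra]. unfold Rdiv. apply Rmult_eq_0_compat_r.
    replace (S^2) with (S*S) by ring. rewrite HSS. ring.
Qed.

Theorem lemma2p4 (ri rj theta : R) :
  0 < ri -> ri < rj -> 0 <= theta <= PI ->
  (cos (theta_ij ri rj) < cos theta < 1 ->
     Derive (g ri rj) theta <
       Derive (g ri rj) 0 * ((cos theta - cos (theta_ij ri rj)) / (1 - cos (theta_ij ri rj)))) /\
  (-1 < cos theta < cos (theta_ij ri rj) ->
     Derive (g ri rj) theta <
       Derive (g ri rj) PI * ((cos theta - cos (theta_ij ri rj)) / (-1 - cos (theta_ij ri rj)))).
Proof.
  intros Ha Hab _.
  destruct (c0_facts ri rj Ha Hab) as [[H0 H1] Hroot].
  unfold theta_ij. rewrite cos_acos by lra.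
  set (c0 := cos_theta_ij ri rj) in *.
  rewrite !derive_g' by auto. rewrite cos_0, cos_PI.
  set (c := cos theta).
  set (a := ri) in *. set (b := rj) in *.
  assert (Hab0 : 0 < a*b) by nra.
  set (c1 := - (a^2+b^2)/(a*b) - c0).
  assert (Hp : 2 <= (a^2+b^2)/(a*b)).
  { apply (Rmult_le_reg_r (a*b)); [lra|]. unfold Rdiv. rewrite Rmult_assoc, Rinv_l by lra. nra. }
  assert (Hfac : forall x, a*b*x^2 + (a^2+b^2)*x - 3*a*b = a*b*(x-c0)*(x-c1)).
  { intros x. apply Rminus_diag_uniq. unfold c1.
    replace (a * b * x ^ 2 + (a ^ 2 + b ^ 2) * x - 3 * a * b -
      a * b * (x - c0) * (x - (- (a ^ 2 + b ^ 2) / (a * b) - c0)))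
    with (a*b*c0^2 + (a^2+b^2)*c0 - 3*a*b) by (field; lra).
    exact Hroot. }
  rewrite !Hfac.
  split; intros [Hc1 Hc2].
  - destruct (Qc_lt a b c 1 Ha Hab ltac:(lra) Hc2 ltac:(lra)) as [Q1 Q2].
    replace (a * b * (a * b * (1 - c0) * (1 - c1)) / Qc a b 1 * ((c - c0) / (1 - c0)))
      with ((a*b*(a*b*(c-c0))) * ((1 - c1) / Qc a b 1)) by (field; lra).
    replace (a * b * (a * b * (c - c0) * (c - c1)) / Qc a b c)
      with ((a*b*(a*b*(c-c0))) * ((c - c1) / Qc a b c)) by (field; lra).
    apply Rmult_lt_compat_l. { apply Rmult_lt_0_compat; [lra|]. apply Rmult_lt_0_compat; lra. }
    apply frac_lt; split; try lra. unfold c1. lra.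
  - destruct (Qc_lt a b (-1) c Ha Hab ltac:(lra) Hc1 ltac:(lra)) as [Q1 Q2].
    replace (a * b * (a * b * (-1 - c0) * (-1 - c1)) / Qc a b (-1) * ((c - c0) / (-1 - c0)))
      with ((a*b*(a*b*(c0-c))) * (- ((-1 - c1) / Qc a b (-1)))) by (field; lra).
    replace (a * b * (a * b * (c - c0) * (c - c1)) / Qc a b c)
      with ((a*b*(a*b*(c0-c))) * (- ((c - c1) / Qc a b c))) by (field; lra).
    apply Rmult_lt_compat_l. { apply Rmult_lt_0_compat; [lra|]. apply Rmult_lt_0_compat; lra. }
    apply Ropp_lt_contravar.
    apply frac_lt; split; try lra. unfold c1. lra.
Qed.
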